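(* In the setting below, the function $f\mapsto \mathcal L(f)$ is concave on $[0,\infty)^{n\times p}$.
   Context: Let $M=(m_{ij})\in\{0,1\}^{n\times p}$, $m_i=\sum_jm_{ij}\ge1$ for all $i$, $m=\sum_im_i$, and fix constants $\hat\sigma_{1,j}>0$ ($j=1,\dots,p$), $\hat\sigma_2>0$. For $0<b<c$ and $q_1,q_2>0$ with $q_1\tanh(q_2(c-b))=b$, let $d=b^2/2+(q_1/q_2)\ln\cosh(q_2(c-b))$ and define $\rho_{b,c}(z)=z^2/2$ if $|z|\le b$, $\rho_{b,c}(z)=d-(q_1/q_2)\ln\cosh(q_2(c-|z|))$ if $b\le|z|\le c$, $\rho_{b,c}(z)=d$ if $|z|\ge c$. Let $\rho_1=\rho_{b_1,c_1}$, $\rho_2=\rho_{b_2,c_2}$ (each with its own admissible constants) and $h_k(z)=\rho_k(\sqrt z)$ for $z\ge0$. For $f=(f_{ij})\in[0,\infty)^{n\times p}$ define $$\mathcal L(f)=\frac{\hat\sigma_2^2}{m}\sum_{i=1}^n m_i\,h_2\!\Big(\frac{1}{m_i\hat\sigma_2^2}\sum_{j=1}^p m_{ij}\hat\sigma_{1,j}^2\,h_1\big(f_{ij}/\hat\sigma_{1,j}^2\big)\Big).$$ (With $f_{ij}=r_{ij}^2$ this is the cellPCA objective $\frac{\hat\sigma_2^2}{m}\sum_i m_i\rho_2(\mathrm{rt}_i/\hat\sigma_2)$, $\mathrm{rt}_i=\sqrt{\frac1{m_i}\sum_jm_{ij}\hat\sigma_{1,j}^2\rho_1(r_{ij}/\hat\sigma_{1,j})}$.)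 *)

(* Defs.v *)
From mathcomp Require Import all_boot all_order all_algebra.
From mathcomp Require Import all_classical all_reals all_analysis.
Set Implicit Arguments. Unset Strict Implicit. Unset Printing Implicit Defensive.
Import Order.TTheory GRing.Theory Num.Theory.
Local Open Scope ring_scope.

Section Defs.
Variable R : realType.

Definition cosh (x : R) : R := (expR x + expR (- x)) / 2.
Definition sinh (x : R) : R := (expR x - expR (- x)) / 2.
Definition tanh (x : R) : R := sinh x / cosh x.

Definition rho_admissible (b c q1 q2 : R) : Prop :=
  [/\ 0 < b, b < c, 0 < q1, 0 < q2 & q1 * tanh (q2 * (c - b)) = b].

Definition rho_d (b c q1 q2 : R) : R :=
  b ^+ 2 / 2 + (q1 / q2) * ln (cosh (q2 * (c - b))).

Definition rho (b c q1 q2 : R) (z : R) : R :=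
  if `|z| <= b then z ^+ 2 / 2
  else if `|z| <= c then rho_d b c q1 q2 - (q1 / q2) * ln (cosh (q2 * (c - `|z|)))
  else rho_d b c q1 q2.

Definition hrho (b c q1 q2 : R) (z : R) : R := rho b c q1 q2 (Num.sqrt z).

Definition cellL (n p : nat) (M : 'I_n -> 'I_p -> bool)
  (sig1 : 'I_p -> R) (sig2 : R)
  (b1 c1 q11 q12 b2 c2 q21 q22 : R) (f : 'M[R]_(n, p)) : R :=
  let mi := fun i : 'I_n => (\sum_(j < p) nat_of_bool (M i j))%N in
  let m := (\sum_(i < n) mi i)%N in
  sig2 ^+ 2 / m%:R *
  \sum_(i < n) (mi i)%:R *
     hrho b2 c2 q21 q22
       ((mi i)%:R^-1 / sig2 ^+ 2 *
        \sum_(j < p) (nat_of_bool (M i j))%:R * sig1 j ^+ 2 *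
                     hrho b1 c1 q11 q12 (f i j / sig1 j ^+ 2)).

End Defs.

(* Main.v *)
Require Import Defs.
From mathcomp Require Import all_boot all_order all_algebra.
From mathcomp Require Import all_classical all_reals all_analysis.
From mathcomp Require Import ring lra.
Import Order.TTheory GRing.Theory Num.Theory.
Local Open Scope ring_scope.
Set Implicit Arguments. Unset Strict Implicit.
Section S.
Variable R : realType.
Implicit Types x y : R.
Lemma cosh_gt0 x : 0 < cosh x.
Proof. by rewrite /cosh divr_gt0 // addr_gt0 // expR_gt0. Qed.
Lemma dcosh x : is_derive x 1 (@cosh R) (sinh x).
Proof.
rewrite /cosh /sinh.
have h1 : is_derive x 1 (fun y : R => expR (- y)) (- expR (- x)).
  have := @is_derive1_comp R expR (fun y => - y) x (expR (-x)) (-1) _ _.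
  by rewrite mulrN1; apply.
have h2 : is_derive x 1 (fun y : R => expR y + expR (- y)) (expR x - expR (- x)).
  exact: is_deriveD.
have := @is_deriveM R R (fun y : R => expR y + expR (- y)) (cst (2^-1)) x 1 _ _ h2 (is_derive_cst _ _ _).
move=> h3; apply: (is_derive_eq h3).
by rewrite scaler0 add0r /= /GRing.scale /= mulrC.
Qed.
Definition LC x := ln (cosh x).
Lemma dLC x : is_derive x 1 LC (tanh x).
Proof.
have := @is_derive1_comp R (@ln R) (@cosh R) x _ _ (is_derive1_ln (cosh_gt0 x)) (dcosh x).
by move=> h; apply: (is_derive_eq h); rewrite /tanh mulrC.
Qed.
Lemma tanhE x : tanh x = 1 - 2 / (expR x ^+ 2 + 1).
Proof.
rewrite /tanh /sinh /cosh expRN.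
have ex := expR_gt0 x.
have h1 : expR x != 0 by rewrite gt_eqF.
have h2 : expR x ^+ 2 + 1 != 0 by rewrite gt_eqF // addr_gt0 // exprn_gt0.
have h3 : expR x + (expR x)^-1 != 0 by rewrite gt_eqF // addr_gt0 // invr_gt0.
by field; rewrite h1 h2.
Qed.
Lemma tanh_le x y : x <= y -> tanh x <= tanh y.
Proof.
move=> xy; rewrite !tanhE lerD2l lerN2.
have ex := expR_gt0 x; have ey := expR_gt0 y.
rewrite ler_pdivrMr ?addr_gt0 ?exprn_gt0 // mulrAC ler_pdivlMr ?addr_gt0 ?exprn_gt0 //.
have e : expR x <= expR y by rewrite ler_expR.
nra.
Qed.
Lemma tanh0 : tanh 0 = 0 :> R.
Proof. by rewrite /tanh /sinh oppr0 subrr mul0r mul0r. Qed.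
Lemma tanh_ge0 x : 0 <= x -> 0 <= tanh x.
Proof. by move=> /tanh_le; rewrite tanh0. Qed.
Lemma LC0 : LC 0 = 0.
Proof. by rewrite /LC /cosh oppr0 expR0 -mulr2n divrr ?ln1 // unitfE pnatr_eq0. Qed.
Lemma LC_bounds a A : a <= A ->
  tanh a * (A - a) <= LC A - LC a <= tanh A * (A - a).
Proof.
move=> aA.
have [c cac ->] : exists2 c, c \in `[a, A] & LC A - LC a = tanh c * (A - a).
  apply: (@MVT_segment R LC (@tanh R) a A aA).
  - by move=> x _; exact: dLC.
  - apply: derivable_within_continuous => x _.
    by have [] := dLC x.
move: cac; rewrite in_itv /= => /andP[ac cA].
have hA : 0 <= A - a by rewrite subr_ge0.
by rewrite !ler_wpM2r // ?tanh_le.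
Qed.


Definition TS (h g : R -> R) (S : R -> Prop) := forall u v, S u -> S v -> u <= v ->
  g v * (v - u) <= h v - h u <= g u * (v - u).

Lemma slope_mono (g : R -> R) u v w : u <= v -> 0 <= w ->
  g v * (v - u) <= g u * (v - u) -> g v * w <= g u * w.
Proof.
rewrite le_eqVlt => /orP[/eqP -> //|uv] w0 h.
apply: ler_wpM2r => //.
have vu : 0 < v - u by rewrite subr_gt0.
by rewrite -(ler_pM2r vu).
Qed.

Lemma TS_glue h g (P Q : R -> Prop) m :
  TS h g P -> TS h g Q -> (forall x, P x -> x <= m) -> P m ->
  (forall x, Q x -> m <= x) -> Q m -> TS h g (fun x => P x \/ Q x).
Proof.
move=> tP tQ Pm' Pm Qm' Qm u v [Pu|Qu] [Pv|Qv] uv.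
- exact: tP.
- have um := Pm' u Pu; have mv := Qm' v Qv.
  have /andP[l1 u1] := tP u m Pu Pm um.
  have /andP[l2 u2] := tQ m v Qm Qv mv.
  have m1 : g m * (v - m) <= g u * (v - m).
    by apply: (@slope_mono g u m); rewrite ?subr_ge0 // (le_trans l1 u1).
  have m2 : g v * (m - u) <= g m * (m - u).
    by apply: (@slope_mono g m v); rewrite ?subr_ge0 // (le_trans l2 u2).
  apply/andP; split.
    have -> : h v - h u = (h v - h m) + (h m - h u) by ring.
    have -> : g v * (v - u) = g v * (v - m) + g v * (m - u) by ring.
    by apply: lerD => //; apply: le_trans l1.
  have -> : h v - h u = (h v - h m) + (h m - h u) by ring.
  have -> : g u * (v - u) = g u * (v - m) + g u * (m - u) by ring.
  by apply: lerD => //; apply: le_trans m1.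
- have um := Qm' u Qu; have vm := Pm' v Pv.
  have eu : u = m by apply/eqP; rewrite eq_le (le_trans uv vm) um.
  have ev : v = m by apply/eqP; rewrite eq_le vm (le_trans um uv).
  by rewrite eu ev; apply: tP => //.
- exact: tQ.
Qed.

Lemma TS_ext h g h' g' (S : R -> Prop) : TS h g S ->
  (forall z, S z -> h z = h' z /\ g z = g' z) -> TS h' g' S.
Proof.
move=> t e u v Su Sv uv.
have [<- <-] := e u Su; have [<- <-] := e v Sv.
exact: t.
Qed.

Lemma TS_sub h g (S S' : R -> Prop) : TS h g S -> (forall z, S' z -> S z) -> TS h g S'.
Proof. by move=> t sub u v Su Sv; apply: t; apply: sub. Qed.

Lemma sqrt_leE (b z : R) : 0 <= b -> (Num.sqrt z <= b) = (z <= b ^+ 2).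
Proof.
by move=> b0; rewrite -{1}(ger0_norm b0) -sqrtr_sqr ler_sqrt // exprn_ge0.
Qed.
Lemma sqrt_geE (b z : R) : 0 <= b -> 0 <= z -> (b <= Num.sqrt z) = (b ^+ 2 <= z).
Proof.
by move=> b0 z0; rewrite -{1}(ger0_norm b0) -sqrtr_sqr ler_sqrt.
Qed.

Section Piece.
Variables (b c q1 q2 : R).
Hypothesis adm : rho_admissible b c q1 q2.

Definition Gm z := q1 * tanh (q2 * (c - Num.sqrt z)) / (2 * Num.sqrt z).
Definition gg z := if z <= b ^+ 2 then 2^-1 else if z <= c ^+ 2 then Gm z else 0.
Definition Hm z := rho_d b c q1 q2 - q1 / q2 * LC (q2 * (c - Num.sqrt z)).

Lemma adm_facts : [/\ 0 < b, b < c, 0 < q1, 0 < q2 & q1 * tanh (q2 * (c - b)) = b].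
Proof. exact: adm. Qed.

Lemma b2c2 : b ^+ 2 < c ^+ 2.
Proof.
have [b0 bc _ _ _] := adm_facts.
by rewrite ltr_pXn2r // ?nnegrE ltW // (lt_trans b0 bc).
Qed.

Lemma hrhoE1 z : 0 <= z <= b ^+ 2 -> hrho b c q1 q2 z = z / 2.
Proof.
have [b0 bc _ _ _] := adm_facts.
move=> /andP[z0 zb]; rewrite /hrho /rho ger0_norm ?sqrtr_ge0 // (sqrt_leE _ (ltW b0)) zb.
by rewrite sqr_sqrtr.
Qed.

Lemma Hm_b2 : Hm (b ^+ 2) = b ^+ 2 / 2.
Proof.
have [b0 bc _ _ _] := adm_facts.
by rewrite /Hm sqrtr_sqr ger0_norm ?ltW // /rho_d /LC addrK.
Qed.

Lemma Gm_b2 : Gm (b ^+ 2) = 2^-1.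
Proof.
have [b0 bc _ _ e] := adm_facts.
rewrite /Gm sqrtr_sqr ger0_norm ?ltW // e.
by field; rewrite gt_eqF.
Qed.

Lemma Hm_c2 : Hm (c ^+ 2) = rho_d b c q1 q2.
Proof.
have [b0 bc _ _ _] := adm_facts.
by rewrite /Hm sqrtr_sqr ger0_norm ?ltW ?(lt_trans b0 bc) // subrr mulr0 LC0 mulr0 subr0.
Qed.

Lemma Gm_c2 : Gm (c ^+ 2) = 0.
Proof.
have [b0 bc _ _ _] := adm_facts.
by rewrite /Gm sqrtr_sqr ger0_norm ?ltW ?(lt_trans b0 bc) // subrr mulr0 tanh0 mulr0 mul0r.
Qed.

Lemma hrhoE2 z : b ^+ 2 <= z <= c ^+ 2 -> hrho b c q1 q2 z = Hm z /\ gg z = Gm z.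
Proof.
have [b0 bc _ _ _] := adm_facts.
have c0 : 0 <= c by rewrite ltW ?(lt_trans b0 bc).
move=> /andP[bz zc].
have z0 : 0 <= z by rewrite (le_trans _ bz) // exprn_ge0 // ltW.
rewrite /hrho /rho /gg ger0_norm ?sqrtr_ge0 // (sqrt_leE _ (ltW b0)) (sqrt_leE _ c0) zc.
case: ifP => zb.
  have -> : z = b ^+ 2 by apply/eqP; rewrite eq_le zb bz.
  by rewrite sqr_sqrtr ?exprn_ge0 ?ltW // Hm_b2 Gm_b2.
by [].
Qed.

Lemma hrhoE3 z : c ^+ 2 <= z -> hrho b c q1 q2 z = rho_d b c q1 q2 /\ gg z = 0.
Proof.
have [b0 bc _ _ _] := adm_facts.
have c0 : 0 <= c by rewrite ltW ?(lt_trans b0 bc).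
move=> cz.
have z0 : 0 <= z by rewrite (le_trans _ cz) // exprn_ge0.
have zb : (z <= b ^+ 2) = false.
  by apply/negbTE; rewrite -ltNge (lt_le_trans b2c2 cz).
rewrite /hrho /rho /gg ger0_norm ?sqrtr_ge0 // (sqrt_leE _ (ltW b0)) (sqrt_leE _ c0) zb.
case: ifP => zc //.
have -> : z = c ^+ 2 by apply/eqP; rewrite eq_le zc cz.
by move: Hm_c2 Gm_c2; rewrite /Hm /Gm /LC => -> ->.
Qed.

Lemma TS2 : TS Hm Gm (fun z => b ^+ 2 <= z <= c ^+ 2).
Proof.
have [b0 bc q10 q20 _] := adm_facts.
have c0 : 0 <= c by rewrite ltW ?(lt_trans b0 bc).
move=> u v /andP[bu uc] /andP[bv vc] uv.
have u0 : 0 <= u by rewrite (le_trans _ bu) // exprn_ge0 // ltW.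
have v0 : 0 <= v by rewrite (le_trans _ bv) // exprn_ge0 // ltW.
set s := Num.sqrt u; set t := Num.sqrt v.
have bs : b <= s by rewrite sqrt_geE // ltW.
have tc : t <= c by rewrite sqrt_leE.
have st : s <= t by rewrite ler_sqrt.
have s0 : 0 < s by apply: lt_le_trans bs.
have t0 : 0 < t by apply: lt_le_trans st.
have evu : v - u = (t + s) * (t - s) by rewrite -{1}(sqr_sqrtr u0) -{1}(sqr_sqrtr v0) -/s -/t; ring.
set a := q2 * (c - t); set A := q2 * (c - s).
have aA : a <= A by rewrite /a /A; apply: ler_wpM2l; [exact: ltW | lra].
have ea : A - a = q2 * (t - s) by rewrite /a /A; ring.
have a0 : 0 <= a by apply: mulr_ge0; [exact: ltW | by rewrite subr_ge0].
have A0 : 0 <= A by rewrite (le_trans a0 aA).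
have /andP[lo up] := @LC_bounds a A aA.
have eH : Hm v - Hm u = q1 / q2 * (LC A - LC a) by rewrite /Hm; ring.
have Ta := @tanh_ge0 a a0; have TA := @tanh_ge0 A A0.
have ts0 : 0 <= t - s by rewrite subr_ge0.
rewrite /Gm -/s -/t -/a -/A eH evu; apply/andP; split.
- apply: (@le_trans _ _ (q1 / q2 * (tanh a * (A - a)))); last first.
    by rewrite ler_wpM2l // divr_ge0 // ltW.
  rewrite ea.
  have -> : q1 / q2 * (tanh a * (q2 * (t - s))) = (q1 * tanh a * (t - s)) * 1.
    by field; rewrite gt_eqF.
  have -> : q1 * tanh a / (2 * t) * ((t + s) * (t - s)) = (q1 * tanh a * (t - s)) * ((t + s) / (2 * t)).
    by field; rewrite gt_eqF.
  apply: ler_wpM2l; first by apply: mulr_ge0 => //; apply: mulr_ge0 => //; exact: ltW.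
  have t2 : 0 < 2 * t by rewrite mulr_gt0.
  by rewrite ler_pdivrMr // mul1r; lra.
- apply: (@le_trans _ _ (q1 / q2 * (tanh A * (A - a)))).
    by rewrite ler_wpM2l // divr_ge0 // ltW.
  rewrite ea.
  have -> : q1 / q2 * (tanh A * (q2 * (t - s))) = (q1 * tanh A * (t - s)) * 1.
    by field; rewrite gt_eqF.
  have -> : q1 * tanh A / (2 * s) * ((t + s) * (t - s)) = (q1 * tanh A * (t - s)) * ((t + s) / (2 * s)).
    by field; rewrite gt_eqF.
  apply: ler_wpM2l; first by apply: mulr_ge0 => //; apply: mulr_ge0 => //; exact: ltW.
  have s2 : 0 < 2 * s by rewrite mulr_gt0.
  by rewrite ler_pdivlMr // mul1r; lra.
Qed.


Lemma TS1 : TS (hrho b c q1 q2) gg (fun z => 0 <= z <= b ^+ 2).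
Proof.
apply: (@TS_ext (fun z => z / 2) (fun=> 2^-1)).
  move=> u v _ _ _ /=.
  have -> : v / 2 - u / 2 = 2^-1 * (v - u) by ring.
  by rewrite lexx.
move=> z hz; split; first by rewrite hrhoE1.
by case/andP: hz => _ zb; rewrite /gg zb.
Qed.

Lemma TS3 : TS (hrho b c q1 q2) gg (fun z => c ^+ 2 <= z).
Proof.
apply: (@TS_ext (fun=> rho_d b c q1 q2) (fun=> 0)).
  by move=> u v _ _ _; rewrite subrr !mul0r lexx.
by move=> z hz; have [-> ->] := hrhoE3 hz.
Qed.

Lemma TSall : TS (hrho b c q1 q2) gg (fun z => 0 <= z).
Proof.
have [b0 bc _ _ _] := adm_facts.
have b20 : 0 <= b ^+ 2 by rewrite exprn_ge0 // ltW.
have t12 : TS (hrho b c q1 q2) gg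
    (fun z => 0 <= z <= b ^+ 2 \/ b ^+ 2 <= z <= c ^+ 2).
  apply: (TS_glue (m := b ^+ 2)) => //.
  - exact: TS1.
  - apply: (TS_ext TS2) => z hz; by have [-> ->] := hrhoE2 hz.
  - by move=> x /andP[].
  - by rewrite b20 lexx.
  - by move=> x /andP[].
  - by rewrite lexx ltW // b2c2.
have t := TS_glue t12 TS3 (m := c ^+ 2).
apply: (TS_sub (t _ _ _ _)).
- move=> x [/andP[_ xb]|/andP[]//]; exact: le_trans xb (ltW b2c2).
- by right; rewrite lexx ltW // b2c2.
- by [].
- exact: lexx.
- move=> z z0; case: (leP z (b ^+ 2)) => zb; first by left; left; rewrite z0.
  case: (leP z (c ^+ 2)) => zc; first by left; right; rewrite ltW.
  by right; rewrite ltW.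
Qed.

Lemma gg_ge0 z : 0 <= z -> 0 <= gg z.
Proof.
move=> z0; rewrite /gg; case: ifP => _; first by rewrite invr_ge0.
case: ifP => // zc.
have [b0 bc q10 q20 _] := adm_facts.
have c0 : 0 <= c by rewrite ltW ?(lt_trans b0 bc).
rewrite /Gm; apply: divr_ge0; last by rewrite mulr_ge0 ?sqrtr_ge0.
apply: mulr_ge0; first exact: ltW.
apply: tanh_ge0; apply: mulr_ge0; first exact: ltW.
by rewrite subr_ge0 sqrt_leE.
Qed.

Lemma hrho_sg x y : 0 <= x -> 0 <= y -> hrho b c q1 q2 y <= hrho b c q1 q2 x + gg x * (y - x).
Proof.
move=> x0 y0; case: (leP x y) => xy.
  by have /andP[_ h] := TSall x0 y0 xy; lra.
have /andP[h _] := TSall y0 x0 (ltW xy).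
have -> : gg x * (y - x) = - (gg x * (x - y)) by ring.
lra.
Qed.

Lemma hrho_mono x y : 0 <= x -> x <= y -> hrho b c q1 q2 x <= hrho b c q1 q2 y.
Proof.
move=> x0 xy; have y0 := le_trans x0 xy.
have := hrho_sg y0 x0.
have : 0 <= gg y * (y - x) by rewrite mulr_ge0 ?gg_ge0 // subr_ge0.
have -> : gg y * (x - y) = - (gg y * (y - x)) by ring.
lra.
Qed.

Lemma hrho0 : hrho b c q1 q2 0 = 0.
Proof. have [b0 _ _ _ _] := adm_facts. by rewrite /hrho /rho sqrtr0 normr0 (ltW b0) expr0n mul0r. Qed.

Lemma hrho_ge0 x : 0 <= x -> 0 <= hrho b c q1 q2 x.
Proof. by move=> x0; rewrite -hrho0 hrho_mono. Qed.

Lemma hrho_conc x y t : 0 <= x -> 0 <= y -> 0 <= t <= 1 ->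
  t * hrho b c q1 q2 x + (1 - t) * hrho b c q1 q2 y <= hrho b c q1 q2 (t * x + (1 - t) * y).
Proof.
move=> x0 y0 /andP[t0 t1].
set z := t * x + (1 - t) * y.
have z0 : 0 <= z by rewrite addr_ge0 // mulr_ge0 // subr_ge0.
have hx := hrho_sg z0 x0; have hy := hrho_sg z0 y0.
have t1' : 0 <= 1 - t by rewrite subr_ge0.
have := ler_wpM2l t0 hx; have := ler_wpM2l t1' hy.
have e : t * (hrho b c q1 q2 z + gg z * (x - z)) + (1 - t) * (hrho b c q1 q2 z + gg z * (y - z))
   = hrho b c q1 q2 z by rewrite /z; ring.
lra.
Qed.

End Piece.
End S.

Lemma comb_w (R : realType) (w a b c t : R) : 0 <= w ->
  t * a + (1 - t) * b <= c -> t * (w * a) + (1 - t) * (w * b) <= w * c.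
Proof.
move=> w0 h.
have -> : t * (w * a) + (1 - t) * (w * b) = w * (t * a + (1 - t) * b) by ring.
exact: ler_wpM2l.
Qed.

Lemma comb_sum (R : realType) (k : nat) (a b c : 'I_k -> R) (t : R) :
  (forall i, t * a i + (1 - t) * b i <= c i) ->
  t * (\sum_(i < k) a i) + (1 - t) * (\sum_(i < k) b i) <= \sum_(i < k) c i.
Proof.
move=> h; rewrite !mulr_sumr -big_split /=.
by apply: ler_sum => i _; exact: h.
Qed.

Unset Implicit Arguments.
Set Strict Implicit.

Theorem lemma2 (R : realType) (n p : nat) (M : 'I_n -> 'I_p -> bool)
  (sig1 : 'I_p -> R) (sig2 : R)
  (b1 c1 q11 q12 b2 c2 q21 q22 : R) :
  (forall i : 'I_n, (0 < \sum_(j < p) nat_of_bool (M i j))%N) ->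
  (forall j : 'I_p, 0 < sig1 j) ->
  0 < sig2 ->
  rho_admissible b1 c1 q11 q12 ->
  rho_admissible b2 c2 q21 q22 ->
  forall (f g : 'M[R]_(n, p)) (t : R),
    (forall i j, 0 <= f i j) -> (forall i j, 0 <= g i j) ->
    0 <= t <= 1 ->
    t * cellL M sig1 sig2 b1 c1 q11 q12 b2 c2 q21 q22 f
      + (1 - t) * cellL M sig1 sig2 b1 c1 q11 q12 b2 c2 q21 q22 g
    <= cellL M sig1 sig2 b1 c1 q11 q12 b2 c2 q21 q22 (t *: f + (1 - t) *: g).
Proof.
move=> mpos s1pos s2pos adm1 adm2 f g t f0 g0 ht.
have /andP[t0 t1] := ht.
have t1' : 0 <= 1 - t by rewrite subr_ge0.
rewrite /cellL.
set mi := fun i : 'I_n => (\sum_(j < p) nat_of_bool (M i j))%N.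
set X := fun (F : 'M[R]_(n, p)) (i : 'I_n) =>
  (mi i)%:R^-1 / sig2 ^+ 2 *
        \sum_(j < p) (nat_of_bool (M i j))%:R * sig1 j ^+ 2 *
                     hrho b1 c1 q11 q12 (F i j / sig1 j ^+ 2).
have s2 : 0 < sig2 ^+ 2 by rewrite exprn_gt0.
have Xge0 (F : 'M[R]_(n, p)) : (forall i j, 0 <= F i j) -> forall i, 0 <= X F i.
  move=> F0 i; rewrite /X; apply: mulr_ge0.
    by rewrite divr_ge0 ?invr_ge0 // ltW.
  apply: sumr_ge0 => j _; apply: mulr_ge0; first by rewrite mulr_ge0 // exprn_ge0 // ltW.
  apply: (hrho_ge0 adm1); apply: divr_ge0 => //; exact: exprn_ge0 (ltW (s1pos j)).
have z0 : forall i j, 0 <= (t *: f + (1 - t) *: g) i j.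
  by move=> i j; rewrite !mxE addr_ge0 // mulr_ge0.
have hX : forall i, t * X f i + (1 - t) * X g i <= X (t *: f + (1 - t) *: g) i.
  move=> i; rewrite /X; apply: comb_w; first by rewrite divr_ge0 ?invr_ge0 // ltW.
  apply: comb_sum => j; apply: comb_w; first by rewrite mulr_ge0 // exprn_ge0 // ltW.
  rewrite !mxE.
  have -> : (t * f i j + (1 - t) * g i j) / sig1 j ^+ 2 =
     t * (f i j / sig1 j ^+ 2) + (1 - t) * (g i j / sig1 j ^+ 2) by ring.
  have sj : 0 <= sig1 j ^+ 2 by rewrite exprn_ge0 // ltW.
  by apply: (hrho_conc adm1) => //; apply: divr_ge0.
apply: comb_w; first by rewrite divr_ge0 // exprn_ge0 // ltW.
apply: comb_sum => i; apply: comb_w => //.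
apply: le_trans (hrho_conc adm2 (Xge0 f f0 i) (Xge0 g g0 i) ht) _.
apply: (hrho_mono adm2) => //.
by rewrite addr_ge0 // mulr_ge0 // Xge0.
Qed.
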